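(* Consider the most-profitable-augmenting-path algorithm (described in the context) run on an instance of the maximum-weight online bipartite left-perfect matching problem with budget $k=4$, and let $M^\star$ be a maximum-weight left-perfect matching of $G$. Then for each timestep $t\in\{1,\dots,n\}$, $p_t\ge w(u_t,M^\star(u_t))-\ell^t_{M^\star(u_t)}$.
   Context: Problem: $G=(L\cup R,E)$ is a complete bipartite graph with $n:=|L|\le|R|$ and edge weights $w:E\to\mathbb{Q}_{\ge0}$. The algorithm initially knows $R$; at timestep $t=1,\dots,n$ the vertex $u_t\in L$ arrives with all incident edges and their weights. At the end of each timestep the algorithm outputs a left-perfect matching of the revealed graph (every arrived vertex of $L$ matched), obtainable from the previous one (empty initially) by at most $4$ (re)assignments (the number of vertices of nonzero degree in the symmetric difference of the two matchings); matched vertices stay matched. Algorithm: when $u_t$ arrives, among all augmenting paths with respect to the current matching $M$ that contain $u_t$ and have length at most $3$, choose one $P$ maximizing the weight of $M\triangle P$ minus the weight of $M$, and output $M\triangle P$. Notation: $M_t$ is the matching at the beginning of timestep $t$ (output at time $t-1$; $M_1=\emptyset$, $M_{n+1}$ is the final matching); $R^t_{\mathsf{exp}}$ is the set of vertices of $R$ not covered by $M_t$; for a matching $M$, $M(u)$ is the partner of $u$. The marginal profit is $p_t:=\sum_{e\in M_{t+1}}w(e)-\sum_{e\in M_t}w(e)$. For $v\in R$, the loss $\ell^t_v:=w(M_t(v),v)-\max_{v'\in R^t_{\mathsf{exp}}}w(M_t(v),v')$ if $v$ is matched in $M_t$, and $\ell^t_v:=0$ otherwise, with the convention $\max\emptyset:=0$.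 *)

(* Defs.v *)
From HB Require Import structures.
From mathcomp Require Import all_boot all_order all_algebra.
Set Implicit Arguments. Unset Strict Implicit. Unset Printing Implicit Defensive.
Import Order.TTheory GRing.Theory Num.Theory.
Local Open Scope ring_scope.

(* Left side L = 'I_n, where vertex i : 'I_n is the (i+1)-th arriving vertex
   u_{i+1}.  The graph is complete
   bipartite; edges are pairs (u, v) : 'I_n * R, weights w u v : rat. *)
Section Matching.
Variables (n : nat) (R : finType) (w : 'I_n -> R -> rat).

Definition edge := ('I_n * R)%type.
Definition vertex := ('I_n + R)%type.

Definition weight (M : {set edge}) : rat := \sum_(e in M) w e.1 e.2.

Definition is_matching (M : {set edge}) : Prop :=
  (forall u v1 v2, (u, v1) \in M -> (u, v2) \in M -> v1 = v2) /\
  (forall u1 u2 v, (u1, v) \in M -> (u2, v) \in M -> u1 = u2).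

Definition left_perfect (M : {set edge}) : Prop :=
  is_matching M /\ forall u : 'I_n, exists v, (u, v) \in M.

Definition covered (M : {set edge}) (x : vertex) : bool :=
  match x with
  | inl u => [exists v, (u, v) \in M]
  | inr v => [exists u, (u, v) \in M]
  end.

Definition edge_of (a b : vertex) : option edge :=
  match a, b with
  | inl u, inr v => Some (u, v)
  | inr v, inl u => Some (u, v)
  | _, _ => None
  end.

Definition path_edges (p : seq vertex) : seq edge :=
  pmap (fun ab => edge_of ab.1 ab.2) (zip p (behead p)).

Definition path_edge_set (p : seq vertex) : {set edge} :=
  [set e | e \in path_edges p].

(* p is an augmenting path w.r.t. M: a simple path (at least one edge) whose
   endpoints are not covered by M and whose edges alternate between edges not
   in M and edges in M (starting, hence also ending, with a non-M edge). *)
Definition endpoints_free (M : {set edge}) (p : seq vertex) : bool :=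
  match p with
  | x :: s => ~~ covered M x && ~~ covered M (last x s)
  | [::] => false
  end.

Definition augmenting (M : {set edge}) (p : seq vertex) : bool :=
  [&& uniq p, 1 < size p,
      size (path_edges p) == (size p).-1,
      endpoints_free M p &
      all (fun ei => (ei.1 \in M) == odd ei.2)
          (zip (path_edges p) (iota 0 (size (path_edges p))))]%N.

Definition symdiff (A B : {set edge}) : {set edge} := (A :\: B) :|: (B :\: A).

Definition gain (M : {set edge}) (p : seq vertex) : rat :=
  weight (symdiff M (path_edge_set p)) - weight M.

(* candidate paths at the timestep where u_{t+1} = t arrives: augmenting paths
   of the revealed graph (left vertices 0..t) containing t, of length <= 3 *)
Definition candidate (M : {set edge}) (t : 'I_n) (p : seq vertex) : bool :=
  [&& augmenting M p, (size p <= 4)%N, (inl t : vertex) \in p &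
      all (fun x : vertex => match x with inl u => (u <= t)%N | inr _ => true end) p].

Definition alg_step (M : {set edge}) (t : 'I_n) (M' : {set edge}) : Prop :=
  exists2 p, candidate M t p &
    (forall q, candidate M t q -> gain M q <= gain M p) /\
    M' = symdiff M (path_edge_set p).

(* Ms k is the matching at the beginning of the timestep in which the vertex
   k : 'I_n (i.e. u_{k+1}) arrives; Ms n is the final matching. *)
Definition alg_run (Ms : nat -> {set edge}) : Prop :=
  Ms 0%N = set0 /\ forall t : 'I_n, alg_step (Ms t) t (Ms t.+1).

Definition profit (Ms : nat -> {set edge}) (t : nat) : rat :=
  weight (Ms t.+1) - weight (Ms t).

(* max over the R-vertices not covered by M of w u v', with max of empty = 0
   (weights are nonnegative, so 0 as neutral element is harmless) *)
Definition max_free (M : {set edge}) (u : 'I_n) : rat :=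
  if [exists v', ~~ covered M (inr v')]
  then \big[Order.max/0]_(v' | ~~ covered M (inr v')) w u v'
  else 0.

Definition loss (M : {set edge}) (v : R) : rat :=
  match [pick u | (u, v) \in M] with
  | Some u => w u v - max_free M u
  | None => 0
  end.

End Matching.

(* Main.v *)
Require Import Defs.
From HB Require Import structures.
From mathcomp Require Import all_boot all_order all_algebra.
From mathcomp Require Import lra.
Set Implicit Arguments. Unset Strict Implicit. Unset Printing Implicit Defensive.
Import Order.TTheory GRing.Theory Num.Theory.
Local Open Scope ring_scope.

Ltac split_all := repeat match goal with H : is_true (_ && _) |- _ => case/andP: H => ? ? end.

Section H.
Variables (n : nat) (R : finType) (w : 'I_n -> R -> rat).

Lemma weight_symdiff (M B : {set edge n R}) :
  weight w (symdiff M B) =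
  weight w M + \sum_(e in B) (if e \in M then - w e.1 e.2 else w e.1 e.2).
Proof.
rewrite /weight (big_mkcond (fun e => e \in symdiff M B)) /=.
rewrite (big_mkcond (fun e => e \in M)) (big_mkcond (fun e => e \in B)) /=.
rewrite -big_split /=; apply: eq_bigr => e _.
rewrite /symdiff !inE.
by case: (e \in M); case: (e \in B) => /=; rewrite ?addr0 ?add0r ?subrr.
Qed.

Lemma gainE (M : {set edge n R}) p :
  gain w M p = \sum_(e <- path_edges p) (if e \in M then - w e.1 e.2 else w e.1 e.2).
Abort.

Lemma path_edges_mem p e : e \in path_edges p -> (inl e.1 : vertex n R) \in p.
Proof.
elim: p => [|a [|b s] IH] //=.
move: IH; rewrite /path_edges /=.
case: a => [a|a]; case: b => [b|b] //= IH.
- by move/IH => h; rewrite in_cons h orbT.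
- rewrite in_cons => /orP [/eqP -> | /IH h]; [exact: mem_head | by rewrite in_cons h orbT].
- rewrite in_cons => /orP [/eqP -> | /IH h]; [by rewrite /= !in_cons eqxx orbT | by rewrite in_cons h orbT].
Qed.


Lemma sum_set_seq (s : seq (edge n R)) (F : edge n R -> rat) :
  uniq s -> \sum_(e in [set e | e \in s]) F e = \sum_(e <- s) F e.
Proof. by move=> us; rewrite big_uniq //; apply: eq_bigl => e; rewrite inE. Qed.

Lemma run_inv Ms : alg_run w Ms -> forall t, (t <= n)%N ->
  forall e, e \in Ms t -> (e.1 < t)%N.
Proof.
case=> H0 Hs; elim=> [|t IH] lt e.
  by rewrite H0 inE.
have [p cand [_ ->]] := Hs (Ordinal lt).
rewrite /symdiff !inE => /orP [/andP [_ /IH h] | /andP [_]].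
  by apply: leq_trans (h (ltnW lt)) _.
move/path_edges_mem.
case/and4P: cand => _ _ _ /allP al /al /=.
done.
Qed.

Lemma cand_free (M : {set edge n R}) t p : candidate M t p -> exists v', ~~ covered M (inr v').
Proof.
case/and4P=> + sz _ _.
case: p sz => [|a [|b [|c [|d [|x s]]]]] //= _.
all: try case: d => d; try case: c => c; case: b => b; case: a => a.
all: rewrite /augmenting /path_edges /= => H; split_all; try done.
all: try match goal with h : is_true (~~ [exists u, (u, ?x) \in ?M]) |- _ => exists x; exact h end.
all: match goal with h : is_true (~~ [exists v, (?c, v) \in ?M]), h2 : is_true (((?c, ?b) \in ?M) == true) |- _ =>
  exfalso; move/negP: h; apply; apply/existsP; exists b; exact: (elimT eqP h2) end.
Qed.
End H.

Theorem lemma3 (n : nat) (R : finType) (w : 'I_n -> R -> rat)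
  (w_ge0 : forall u v, 0 <= w u v)
  (hLR : (n <= #|R|)%N)
  (Ms : nat -> {set edge n R})
  (run : alg_run w Ms)
  (Mstar : {set edge n R})
  (Mstar_lp : left_perfect Mstar)
  (Mstar_max : forall M : {set edge n R}, left_perfect M -> weight w M <= weight w Mstar) :
  forall (t : 'I_n) (v : R), (t, v) \in Mstar ->
    profit w Ms t >= w t v - loss w (Ms t) v.
Proof.
move=> t v _.
have [H0 Hs] := run.
have inv := run_inv run (ltnW (ltn_ord t)).
have [p0 cand0 [max0 eq0]] := Hs t.
have prof : forall q, candidate (Ms t) t q -> gain w (Ms t) q <= profit w Ms t.
  by move=> q cq; rewrite /profit eq0; exact: max0.
have tfree : ~~ covered (Ms t) (inl t).
  by apply/existsP => -[v' h]; have := inv _ h; rewrite ltnn.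
have tvM : (t, v) \notin Ms t.
  by apply/negP => h; move/negP: tfree; apply; apply/existsP; exists v.
have aK : forall a b : rat, a + b - a = b by move=> a b; rewrite addrC addKr.
rewrite /loss; case: pickP => [u uv | nov].
  have ut := inv _ uv; rewrite /= in ut.
  have claim : forall v', ~~ covered (Ms t) (inr v') ->
      w u v' <= profit w Ms t - w t v + w u v.
    move=> v' v'free.
    have vv' : v != v'.
      apply/eqP => ev; move/negP: v'free; apply; apply/existsP; exists u; by rewrite -ev.
    have uv'M : (u, v') \notin Ms t.
      by apply/negP => h; move/negP: v'free; apply; apply/existsP; exists u.
    have tu : (t : 'I_n) != u.
      by apply/eqP => e; move: ut; rewrite e ltnn.
    have cq : candidate (Ms t) t [:: inl t; inr v; inl u; inr v'].
      have tf := tfree; have vf := v'free; rewrite /covered in tf vf.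
      rewrite /candidate /augmenting /path_edges /= tf vf (negbTE tvM) uv (negbTE uv'M) mem_head leqnn.
      have e1 : (inl t == inl u :> vertex n R) = false by apply/eqP => -[] e; move/eqP: tu.
      have e2 : (inr v == inr v' :> vertex n R) = false by apply/eqP => -[] e; move/eqP: vv'.
      have e3 : (inl t == inr v' :> vertex n R) = false by [].
      by rewrite !inE /= e1 e2 e3 (ltnW ut).
    have := prof _ cq.
    rewrite /gain weight_symdiff /path_edge_set /path_edges /= sum_set_seq.
      rewrite !big_cons big_nil (negbTE tvM) uv (negbTE uv'M) /= aK => h; lra.
    by rewrite /= !inE !xpair_eqE (negbTE tu) (negbTE vv') /= andbF.
  rewrite /max_free; case: ifP => [ex | nex].
    have [v1 f1] := existsP ex.
    have c0 : 0 <= profit w Ms t - w t v + w u v := le_trans (w_ge0 u v1) (claim v1 f1).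
    have hm : \big[Order.max/0]_(v' | ~~ covered (Ms t) (inr v')) w u v' <= profit w Ms t - w t v + w u v.
      by apply: bigmax_le.
    lra.
  have [v1 f1] := cand_free cand0.
  by move/negbT/existsPn: nex => /(_ v1); rewrite f1.
have vfree : ~~ covered (Ms t) (inr v).
  by apply/existsP => -[u h]; rewrite nov in h.
have cq : candidate (Ms t) t [:: inl t; inr v].
  have tf := tfree; have vf := vfree; rewrite /covered in tf vf.
  by rewrite /candidate /augmenting /path_edges /= tf vf (negbTE tvM) mem_head leqnn.
have := prof _ cq.
rewrite /gain weight_symdiff /path_edge_set /path_edges /= sum_set_seq // big_seq1.
by rewrite (negbTE tvM) aK subr0.
Qed.
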